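(* For every first-order formula $\varphi$ of the language of group theory and every evaluation $e:\{x_1,x_2,\dots\}\to\mathbb N$ of its variables, the set $\mathcal S_{\varphi[e]}=\{G\in\mathcal G:\ \overline G\models\varphi[e]\}$ is Borel in $\mathcal G$. Consequently, if $\varphi$ is a sentence, then $\mathcal S_\varphi$ is either meager or comeager in $\mathcal G$.
   Context: Let $\mathbb N=\{1,2,3,\dots\}$. Equip $\mathbb N^{\mathbb N\times\mathbb N}$ with the product topology of the discrete topology on $\mathbb N$. Let $\mathcal G$ be the subspace consisting of those $A\in\mathbb N^{\mathbb N\times\mathbb N}$ that are the multiplication table of a group on the underlying set $\mathbb N$ whose identity element is $1$. For $G\in\mathcal G$, $\overline G$ denotes the group on $\mathbb N$ with multiplication table $G$. The language of group theory has a binary function symbol (multiplication) and a constant symbol $1$, with variables $x_1,x_2,\dots$; $\overline G\models\varphi[e]$ means $\varphi$ is true in $\overline G$ under the variable assignment $e$. *)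

(* Defs.v *)
From HB Require Import structures.
From mathcomp Require Import all_boot all_order all_algebra.
From mathcomp Require Import all_classical all_reals.
From mathcomp Require Import topology function_spaces subtype_topology
  discrete_topology measurable_structure.

Set Implicit Arguments.
Unset Strict Implicit.
Unset Printing Implicit Defensive.

Local Open Scope classical_set_scope.

Definition Npos : Type := {n : nat | (0 < n)%N}.
HB.instance Definition _ := Choice.on Npos.

Definition one : Npos := exist (fun n => (0 < n)%N) 1%N isT.

Definition Ndisc : topologicalType := discrete_topology Npos.

Definition Tables : topologicalType := {ptws (Npos * Npos)%type -> Ndisc}.

Definition is_group_table (A : Npos * Npos -> Npos) : Prop :=
  [/\ (forall x y z : Npos, A (A (x, y), z) = A (x, A (y, z))),
      (forall x : Npos, A (one, x) = x /\ A (x, one) = x)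
    & (forall x : Npos, exists y : Npos, A (x, y) = one /\ A (y, x) = one)].

Definition group_tables : set Tables := [set A | is_group_table A].

Definition GSpace : topologicalType := set_type group_tables.

Definition gmul (G : GSpace) (x y : Npos) : Npos := (set_val G : Tables) (x, y).

(** First-order language of group theory: binary multiplication, constant 1.
    Variables x_1, x_2, ... are indexed by nat (index i stands for x_(i+1)). *)
Inductive term : Type :=
| Tvar : nat -> term
| Tone : term
| Tmul : term -> term -> term.

Inductive formula : Type :=
| Feq : term -> term -> formula
| Ffalse : formula
| Fnot : formula -> formula
| Fand : formula -> formula -> formula
| For : formula -> formula -> formula
| Fimp : formula -> formula -> formula
| Fforall : nat -> formula -> formula
| Fexists : nat -> formula -> formula.

Fixpoint term_eval (G : GSpace) (e : nat -> Npos) (t : term) : Npos :=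
  match t with
  | Tvar i => e i
  | Tone => one
  | Tmul t1 t2 => gmul G (term_eval G e t1) (term_eval G e t2)
  end.

Definition update (e : nat -> Npos) (i : nat) (a : Npos) : nat -> Npos :=
  fun j => if j == i then a else e j.

Fixpoint sat (G : GSpace) (phi : formula) (e : nat -> Npos) : Prop :=
  match phi with
  | Feq t1 t2 => term_eval G e t1 = term_eval G e t2
  | Ffalse => False
  | Fnot p => ~ sat G p e
  | Fand p q => sat G p e /\ sat G q e
  | For p q => sat G p e \/ sat G q e
  | Fimp p q => sat G p e -> sat G q e
  | Fforall i p => forall a : Npos, sat G p (update e i a)
  | Fexists i p => exists a : Npos, sat G p (update e i a)
  end.

Fixpoint term_vars (t : term) (i : nat) : bool :=
  match t with
  | Tvar j => j == i
  | Tone => false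
  | Tmul t1 t2 => term_vars t1 i || term_vars t2 i
  end.

Fixpoint free_var (phi : formula) (i : nat) : bool :=
  match phi with
  | Feq t1 t2 => term_vars t1 i || term_vars t2 i
  | Ffalse => false
  | Fnot p => free_var p i
  | Fand p q | For p q | Fimp p q => free_var p i || free_var q i
  | Fforall j p | Fexists j p => (j != i) && free_var p i
  end.

Definition sentence (phi : formula) : Prop := forall i, ~~ free_var phi i.

Definition S_sat (phi : formula) (e : nat -> Npos) : set GSpace :=
  [set G | sat G phi e].

Definition Borel {T : topologicalType} (A : set T) : Prop := <<s (@open T) >> A.

Definition nowhere_dense {T : topologicalType} (A : set T) : Prop :=
  (closure A)° = set0.

Definition meager {T : topologicalType} (A : set T) : Prop :=
  exists F : nat -> set T, (forall n, nowhere_dense (F n)) /\ A `<=` \bigcup_n F n.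

Definition comeager {T : topologicalType} (A : set T) : Prop := meager (~` A).

(* Main.v *)
Require Import Defs.
From mathcomp Require Import all_boot all_classical.
From mathcomp Require Import all_order all_algebra all_reals topology function_spaces subtype_topology discrete_topology measurable_structure.
Local Open Scope classical_set_scope.

Definition np (n : nat) : Npos := exist (fun n => (0 < n)%N) n.+1 (ltn0Sn n).
Lemma npK (a : Npos) : np (val a).-1 = a.
Proof. case: a => [[|n] h] //; exact: val_inj. Qed.
Lemma np_inj : injective np.
Proof. by move=> m n [] . Qed.

Fixpoint cylP (f : Npos * Npos -> Npos) (s : seq (nat * nat * nat)) : Prop :=
  match s with
  | [::] => True
  | (x, y, z) :: s' => f (np x, np y) = np z /\ cylP f s'
  end.

Lemma cylP_cat f s1 s2 : cylP f (s1 ++ s2) <-> cylP f s1 /\ cylP f s2.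
Proof.
elim: s1 => [|[[x y] z] s IH] /=; first by tauto.
rewrite IH; tauto.
Qed.

Definition cylT (s : seq (nat * nat * nat)) : set Tables := [set f | cylP f s].

Lemma open_cylT s : open (cylT s).
Proof.
elim: s => [|[[x y] z] s IH].
  have -> : cylT [::] = setT by apply/seteqP; split.
  exact: openT.
have -> : cylT ((x, y, z) :: s) =
   ((fun f : Tables => f (np x, np y)) @^-1` [set np z]) `&` cylT s.
  by apply/seteqP; split.
apply: openI => //.
have hc : continuous (fun f : Tables => f (np x, np y)).
  exact: (@proj_continuous _ (fun _ : (Npos * Npos)%type => Ndisc) (np x, np y)).
have := (continuousP _).1 hc [set np z].
apply; exact: discrete_open.
Qed.

Definition tab (G : GSpace) : Npos * Npos -> Npos := set_val G.
Definition cyl (s : seq (nat * nat * nat)) : set GSpace := [set G | cylP (tab G) s].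

Lemma open_cyl s : open (cyl s).
Proof.
have hc : continuous (set_val : GSpace -> Tables) by exact: initial_continuous.
exact: ((continuousP _).1 hc _ (open_cylT s)).
Qed.

Lemma cylT_nbhs (f : Tables) (W : set Tables) : nbhs f W ->
  exists s, cylP f s /\ cylT s `<=` W.
Proof.
pose F := filter_from [set s | cylP f s] cylT.
have FF : Filter F.
  apply: filter_from_filter; first by exists [::].
  move=> i j fi fj; exists (i ++ j); first by apply/cylP_cat.
  by move=> g /cylP_cat.
suff : F --> f by move=> /(_ W) H /H [s fs sW]; exists s.
have := @cvg_sup _ _ (fun i : (Npos * Npos)%type => Topological.class
    (initial_topology (fun f : (forall i, Ndisc) => f i))) F f FF.
move=> [_ H]; apply: H => i A /=.
case=> _ /= [] [C oC <-] Cf sBA.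
exists [:: ((val i.1).-1, (val i.2).-1, (val (f i)).-1)].
  by rewrite /= !npK; case: i {Cf sBA}.
move=> g /= [+ _]; rewrite !npK => gi; apply: sBA; rewrite /=.
by case: i gi Cf => [a b] /= ->.
Qed.

Lemma nbhsGP (G : GSpace) (V : set GSpace) :
  nbhs G V <-> exists s, cylP (tab G) s /\ cyl s `<=` V.
Proof.
split.
  case=> _ /= [] [W oW <-] WG sWV.
  have [s [fs sW]] := @cylT_nbhs (set_val G) W (open_nbhs_nbhs (conj oW WG)).
  by exists s; split => // H HS; apply: sWV; apply: sW.
move=> [s [Gs sV]]; apply: (filterS sV).
by apply: open_nbhs_nbhs; split; [exact: open_cyl|].
Qed.

Lemma term_loc (G : GSpace) e t : exists s, cylP (tab G) s /\
  forall G', cylP (tab G') s -> term_eval G' e t = term_eval G e t.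
Proof.
elim: t => [i||t1 [s1 [G1 H1]] t2 [s2 [G2 H2]]]; try by exists [::].
set a := term_eval G e t1; set b := term_eval G e t2.
exists (s1 ++ s2 ++ [:: ((val a).-1, (val b).-1, (val (tab G (a, b))).-1)]).
split.
  by apply/cylP_cat; split => //; apply/cylP_cat; split => //=; rewrite !npK.
move=> G' /cylP_cat [/H1 e1 /cylP_cat [/H2 e2 /= [+ _]]].
by rewrite !npK /gmul /= e1 e2.
Qed.

Lemma open_Feq t1 t2 e : open (S_sat (Feq t1 t2) e).
Proof.
rewrite openE => G /= hG; apply/nbhsGP.
have [s1 [G1 H1]] := term_loc G e t1; have [s2 [G2 H2]] := term_loc G e t2.
exists (s1 ++ s2); split; first by apply/cylP_cat.
by move=> G' /cylP_cat [/H1 + /H2] /=; rewrite hG => -> ->.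
Qed.

Lemma sat_closure (P : set GSpace -> Prop) :
  (forall V, open V -> P V) -> (forall A, P A -> P (~` A)) ->
  (forall A : nat -> set GSpace, (forall n, P (A n)) -> P (\bigcup_n A n)) ->
  forall phi e, P (S_sat phi e).
Proof.
move=> Po PC PU.
have PU2 A B : P A -> P B -> P (A `|` B).
  move=> PA PB.
  have -> : A `|` B = \bigcup_n (if n is 0 then A else B).
    apply/seteqP; split => [x [Ax|Bx]|x [[|n] _ h]]; [by exists 0|by exists 1|by left|by right].
  by apply: (PU) => -[|n].
have PI2 A B : P A -> P B -> P (A `&` B).
  move=> PA PB; rewrite -[A `&` B]setCK setCI; apply: (PC); apply: (PU2); exact: PC.
elim => [t1 t2 e|e|p IH e|p IHp q IHq e|p IHp q IHq e|p IHp q IHq e|i p IH e|i p IH e].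
- exact/Po/open_Feq.
- have -> : S_sat Ffalse e = set0 by apply/seteqP; split.
  exact/Po/open0.
- exact: PC (IH e).
- exact: PI2 _ _ (IHp e) (IHq e).
- have -> : S_sat (For p q) e = S_sat p e `|` S_sat q e by [].
  exact: PU2 _ _ (IHp e) (IHq e).
- have -> : S_sat (Fimp p q) e = ~` S_sat p e `|` S_sat q e.
    apply/seteqP; split => G /=.
      by move=> h; have [/h|] := pselect (sat G p e); [right|left].
    by move=> [] h // /h.
  exact: PU2 _ _ (PC _ (IHp e)) (IHq e).
- have -> : S_sat (Fforall i p) e = ~` \bigcup_n ~` S_sat p (update e i (np n)).
    apply/seteqP; split => G /=.
      by move=> h [n _ /= ]; apply.
    move=> h a; apply: contrapT => ha; apply: h; exists (val a).-1 => //=.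
    by rewrite npK.
  by apply: (PC); apply: (PU) => n; apply: (PC).
- have -> : S_sat (Fexists i p) e = \bigcup_n S_sat p (update e i (np n)).
    apply/seteqP; split => G /=.
      by move=> [a h]; exists (val a).-1 => //=; rewrite npK.
    by move=> [n _ h]; exists (np n).
  by apply: (PU).
Qed.

Lemma part1 phi e : Borel (S_sat phi e).
Proof.
apply: sat_closure.
- by move=> V oV; apply: sub_sigma_algebra.
- by move=> A hA; rewrite -setTD; exact: sigma_algebraCD.
- move=> A HA; have := @sigma_algebra_bigcup GSpace setT open A HA; exact.
Qed.

Section Baire.
Variable T : topologicalType.
Implicit Types A B C M U : set T.

Lemma nd_closed A C : closed C -> C° = set0 -> A `<=` C -> nowhere_dense A.
Proof.
move=> cC iC AC; rewrite /nowhere_dense; apply/seteqP; split => // x.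
rewrite -iC; apply: interiorS.
by rewrite (closure_id C).1 //; apply: closureS.
Qed.

Lemma nd_sub A B : A `<=` B -> nowhere_dense B -> nowhere_dense A.
Proof.
move=> AB nB; apply: (@nd_closed _ (closure B)) => //.
  exact: closed_closure.
exact: subset_trans AB (@subset_closure _ B).
Qed.

Lemma nd0 : nowhere_dense (@set0 T).
Proof. by rewrite /nowhere_dense closure0 interior0. Qed.

Lemma meager_sub A B : A `<=` B -> meager B -> meager A.
Proof. by move=> AB [F [nF BF]]; exists F; split => //; exact: subset_trans AB BF. Qed.

Lemma meager0 : meager (@set0 T).
Proof. by exists (fun _ => set0); split => // _; exact: nd0. Qed.

Lemma meager_bigcup (A : nat -> set T) : (forall n, meager (A n)) ->
  meager (\bigcup_n A n).
Proof.
move=> mA; have [F hF] := choice mA.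
exists (fun m => match (unpickle m : option (nat * nat)) with
                 | Some (i, j) => F i j | None => set0 end); split.
  by move=> m; case: (unpickle m) => [[i j]|]; [exact: (hF i).1|exact: nd0].
move=> x [i _ Aix]; have [_ /(_ x Aix) [j _ Fx]] := hF i.
exists (pickle (i, j)) => //=; by rewrite pickleK.
Qed.

Definition BP A := exists U M, [/\ open U, meager M & (A `\` U) `|` (U `\` A) `<=` M].

Lemma BP_open U : open U -> BP U.
Proof.
move=> oU; exists U, set0; split => //; first exact: meager0.
by move=> x [[]|[]].
Qed.

Lemma BP_C A : BP A -> BP (~` A).
Proof.
move=> [U [M [oU mM sM]]].
pose U' := (~` U)°.
pose D := ~` U `&` ~` U'.
have nD : nowhere_dense D.
  apply: (@nd_closed _ (D)) => //.
    apply: closedI; first by rewrite closedC.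
    by rewrite closedC; exact: open_interior.
  apply/seteqP; split => // x /= xD.
  have : (~` U)° x by apply: interiorS xD => y [].
  by have [_ ] := interior_subset xD.
exists U', (M `|` D); split.
- exact: open_interior.
- move: nD => /(fun h => h) nD.
  have [F [nF MF]] := mM.
  exists (fun n => if n is 0 then D else F n.-1); split; first by case.
  move=> x [/MF [n _ Fx]|Dx]; first by exists n.+1.
  by exists 0.
- move=> x [[nAx nU'x]|[U'x nnAx]].
    have [Ux|nUx] := pselect (U x); first by left; apply: sM; right.
    by right.
  left; apply: sM; left; split; first exact: contrapT.
  exact: (interior_subset U'x).
Qed.

Lemma BP_bigcup (A : nat -> set T) : (forall n, BP (A n)) -> BP (\bigcup_n A n).
Proof.
move=> hA; have [U hU] := choice hA; have [M hM] := choice hU.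
exists (\bigcup_n U n), (\bigcup_n M n); split.
- by apply: bigcup_open => n _; have [] := hM n.
- by apply: meager_bigcup => n; have [] := hM n.
- move=> x [[[n _ Ax] nUx]|[[n _ Ux] nAx]].
    exists n => //; have [_ _] := hM n; apply; left; split => //.
    by move=> Unx; apply: nUx; exists n.
  exists n => //; have [_ _] := hM n; apply; right; split => //.
  by move=> Anx; apply: nAx; exists n.
Qed.

Lemma nd_preimage (h k : T -> T) : continuous h -> continuous k ->
  cancel h k -> cancel k h -> forall N, nowhere_dense N -> nowhere_dense (h @^-1` N).
Proof.
move=> ch ck hk kh N nN.
apply: (@nd_closed _ (h @^-1` closure N)).
- rewrite -openC preimage_setC; apply: ((continuousP h).1 ch); rewrite openC; exact: closed_closure.
- apply/seteqP; split => // x hx; rewrite -nN.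
  suff : (closure N)° (h x) by rewrite nN.
  have oW : open (k @^-1` (h @^-1` closure N)°).
    by apply: ((continuousP k).1 ck); exact: open_interior.
  have : (k @^-1` (h @^-1` closure N)°) (h x) by rewrite /= hk.
  move: oW; rewrite openE => /[apply] nW.
  by apply: filterS nW => y /= /interior_subset; rewrite /= kh.
- by move=> x /= Nx; apply: subset_closure.
Qed.

Lemma meager_preimage (h k : T -> T) : continuous h -> continuous k ->
  cancel h k -> cancel k h -> forall M, meager M -> meager (h @^-1` M).
Proof.
move=> ch ck hk kh M [F [nF MF]].
exists (fun n => h @^-1` F n); split.
  move=> n; exact: (@nd_preimage h k ch ck hk kh _ (nF n)).
by move=> x /MF [n _ Fx]; exists n.
Qed.


Lemma nd_meager A : nowhere_dense A -> meager A.
Proof. by move=> nA; exists (fun _ => A); split => // x Ax; exists 0. Qed.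

Lemma zero_one A (h k : nat -> T -> T) U M :
  open U -> meager M -> (A `\` U) `|` (U `\` A) `<=` M ->
  (forall n, continuous (h n)) -> (forall n, continuous (k n)) ->
  (forall n, cancel (h n) (k n)) -> (forall n, cancel (k n) (h n)) ->
  (forall n x, A (h n x) <-> A x) ->
  (forall V, open V -> V !=set0 -> exists n, (h n @^-1` U) `&` V !=set0) ->
  meager (~` A).
Proof.
move=> oU mM sM ch ck hk kh hA dense.
pose W := \bigcup_n (h n @^-1` U).
have oW : open W by apply: bigcup_open => n _; exact: ((continuousP (h n)).1 (ch n)).
have nW : nowhere_dense (~` W).
  apply: (@nd_closed _ (~` W)) => //; first by rewrite closedC.
  apply/seteqP; split => // x xW.
  have [n [y [Uy Vy]]] := dense _ (@open_interior _ (~` W)) (ex_intro _ x xW).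
  by apply: (interior_subset Vy); exists n.
apply: (@meager_sub _ (\bigcup_n (if n is n'.+1 then h n' @^-1` M else ~` W))).
  move=> x nAx; have [Wx|nWx] := pselect (W x); last by exists 0.
  case: Wx => n _ Ux; exists n.+1 => //=; apply: sM; right; split => //.
  by move=> /hA.
apply: meager_bigcup => -[|n]; first exact: nd_meager.
exact: (@meager_preimage (h n) (k n) (ch n) (ck n) (hk n) (kh n) _ mM).
Qed.

End Baire.

Record perm := Perm {
  pf : Npos -> Npos; pg : Npos -> Npos;
  pfg : cancel pf pg; pgf : cancel pg pf; pf1 : pf Defs.one = Defs.one }.

Lemma pg1 p : pg p Defs.one = Defs.one.
Proof. by rewrite -{1}(pf1 p) pfg. Qed.

Definition pinv (p : perm) : perm :=
  @Perm (pg p) (pf p) (pgf p) (pfg p) (pg1 p).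

Definition actT (p : perm) (f : Npos * Npos -> Npos) : Npos * Npos -> Npos :=
  fun xy => pf p (f (pg p xy.1, pg p xy.2)).

Lemma act_group p f : is_group_table f -> is_group_table (actT p f).
Proof.
case=> As Id Iv; split.
- by move=> x y z; rewrite /actT /= !pfg As.
- by move=> x; rewrite /actT /= pg1; have [-> ->] := Id (pg p x); rewrite pgf.
- move=> x; have [y [h1 h2]] := Iv (pg p x); exists (pf p y).
  by rewrite /actT /= pfg h1 h2 pf1.
Qed.

Lemma tab_group (G : GSpace) : is_group_table (tab G).
Proof. exact: (set_valP G). Qed.

Definition act (p : perm) (G : GSpace) : GSpace :=
  exist _ (actT p (tab G)) (mem_set (@act_group p (tab G) (tab_group G))).

Lemma tab_act p G : tab (act p G) = actT p (tab G).
Proof. by []. Qed.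

Lemma actK p : cancel (act p) (act (pinv p)).
Proof.
move=> G; apply: val_inj => /=; apply: funext => -[x y].
by rewrite /actT /= tab_act /actT /= !pfg.
Qed.

Definition encode (a : Npos) : nat := (val a).-1.

Lemma cylP_act p f s : cylP f (map (fun t => (encode (pg p (np t.1.1)), encode (pg p (np t.1.2)), encode (pg p (np t.2)))) s) ->
  cylP (actT p f) s.
Proof.
elim: s => [|[[x y] z] s IH] //= [h1 /IH hs]; split => //.
by rewrite /actT /= /encode !npK in h1 *; rewrite h1 pgf.
Qed.

Lemma cylP_act_inv p f s : cylP (actT p f) s ->
  cylP f (map (fun t => (encode (pg p (np t.1.1)), encode (pg p (np t.1.2)), encode (pg p (np t.2)))) s).
Proof.
elim: s => [|[[x y] z] s IH] //= [h1 /IH hs]; split => //.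
by rewrite /encode !npK -h1 /actT /= pfg.
Qed.

Lemma act_continuous p : continuous (act p).
Proof.
apply/continuousP => V; rewrite !openE => oV G /= VG.
have /nbhsGP [s [Gs sV]] := oV _ VG.
apply/nbhsGP; exists (map (fun t => (encode (pg p (np t.1.1)), encode (pg p (np t.1.2)), encode (pg p (np t.2)))) s).
split; first by apply: cylP_act_inv; rewrite -tab_act.
by move=> H /cylP_act Hs; apply: sV.
Qed.

Lemma term_act p G e t : term_eval (act p G) e t = pf p (term_eval G (pg p \o e) t).
Proof.
elim: t => [i||t1 IH1 t2 IH2] /=; first by rewrite pgf.
  by rewrite pf1.
by rewrite /gmul IH1 IH2 -/(tab _) tab_act /actT /= !pfg.
Qed.

Lemma update_comp (g : Npos -> Npos) e i a : g \o update e i a = update (g \o e) i (g a).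
Proof. by apply: funext => j; rewrite /update /=; case: (j == i). Qed.

Lemma sat_act p G phi e : sat (act p G) phi e = sat G phi (pg p \o e).
Proof.
elim: phi e => [t1 t2||q IH|q IHq r IHr|q IHq r IHr|q IHq r IHr|i q IH|i q IH] e /=.
- rewrite !term_act; apply: propext; split; last by move=> ->.
  by move=> /(can_inj (pfg p)).
- by [].
- by rewrite IH.
- by rewrite IHq IHr.
- by rewrite IHq IHr.
- by rewrite IHq IHr.
- apply: propext; split => h a.
    by have := h (pf p a); rewrite IH update_comp pfg.
  by rewrite IH update_comp; exact: h.
- apply: propext; split => -[a h].
    by exists (pg p a); rewrite -update_comp -IH.
  by exists (pf p a); rewrite IH update_comp pfg.
Qed.

Lemma term_ext G e e' t : (forall i, term_vars t i -> e i = e' i) ->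
  term_eval G e t = term_eval G e' t.
Proof.
elim: t => [i||t1 IH1 t2 IH2] /= h.
- by apply: h; rewrite /= eqxx.
- by [].
- rewrite IH1 ?IH2 // => i hi; apply: h; rewrite /= hi ?orbT //.
Qed.

Lemma sat_ext G phi e e' : (forall i, free_var phi i -> e i = e' i) ->
  sat G phi e = sat G phi e'.
Proof.
elim: phi e e' => [t1 t2||q IH|q IHq r IHr|q IHq r IHr|q IHq r IHr|i q IH|i q IH] e e' /= h.
- rewrite (@term_ext G e e' t1) ?(@term_ext G e e' t2) // => j hj; apply: h; rewrite hj ?orbT //.
- by [].
- by rewrite (IH e e').
- by rewrite (IHq e e') ?(IHr e e') // => j hj; apply: h; rewrite hj ?orbT.
- by rewrite (IHq e e') ?(IHr e e') // => j hj; apply: h; rewrite hj ?orbT.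
- by rewrite (IHq e e') ?(IHr e e') // => j hj; apply: h; rewrite hj ?orbT.
- have E a : sat G q (update e i a) = sat G q (update e' i a).
    apply: IH => j hj; rewrite /update; case: eqP => // /eqP ji.
    by apply: h; rewrite hj andbT eq_sym.
  by apply: propext; split => H a; [rewrite -E|rewrite E].
- have E a : sat G q (update e i a) = sat G q (update e' i a).
    apply: IH => j hj; rewrite /update; case: eqP => // /eqP ji.
    by apply: h; rewrite hj andbT eq_sym.
  by apply: propext; split => -[a H]; exists a; [rewrite -E|rewrite E].
Qed.

Lemma sat_sentence G phi e e' : sentence phi -> sat G phi e = sat G phi e'.
Proof. by move=> sp; apply: sat_ext => i hi; have := sp i; rewrite hi. Qed.

From Stdlib Require Cantor.

Definition sw (a b x : nat) : nat := if x == a then b else if x == b then a else x.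

Lemma swK a b : involutive (sw a b).
Proof.
move=> x; rewrite /sw.
case: (eqVneq x a) => [->|xa]; first by rewrite eqxx; case: eqVneq => // ->.
case: (eqVneq x b) => [->|xb]; first by rewrite eqxx.
by rewrite (negPf xa) (negPf xb).
Qed.

Fixpoint fk (k : nat) : (nat -> nat) * (nat -> nat) :=
  match k with
  | 0 => (id, id)
  | k'.+1 => let fg := fk k' in
             let b := fg.1 (Cantor.to_nat (k', 0)) in
             (sw k' b \o fg.1, fg.2 \o sw k' b)
  end.

Lemma c_inj : injective Cantor.to_nat.
Proof. exact: (can_inj Cantor.cancel_of_to). Qed.

Lemma fk_spec k : [/\ cancel (fk k).1 (fk k).2, cancel (fk k).2 (fk k).1 &
  forall a, a < k -> (fk k).1 (Cantor.to_nat (a, 0)) = a].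
Proof.
elim: k => [|k [c1 c2 h]] /=; first by split.
set b := (fk k).1 (Cantor.to_nat (k, 0)).
split.
- by move=> x /=; rewrite swK c1.
- by move=> x /=; rewrite c2 swK.
- move=> a; rewrite ltnS leq_eqVlt => /orP [/eqP ->|ak] /=.
    by rewrite /sw -/b eqxx; case: eqVneq.
  rewrite h // /sw; have -> : (a == k) = false by apply/negbTE; rewrite ltn_eqF.
  case: eqVneq => // ab.
  have : (Cantor.to_nat (a, 0)) = (Cantor.to_nat (k, 0)).
    by apply: (can_inj c1); rewrite h // -ab.
  by move/c_inj => [] ak'; move: ak; rewrite ak' ltnn.
Qed.

Definition bN K (xy : nat * nat) : nat := (fk K).1 (Cantor.to_nat xy).
Definition bNi K (n : nat) : nat * nat := Cantor.of_nat ((fk K).2 n).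

Lemma bNK K : cancel (bN K) (bNi K).
Proof. by move=> xy; rewrite /bN /bNi; have [-> _ _] := fk_spec K; rewrite Cantor.cancel_of_to. Qed.
Lemma bNiK K : cancel (bNi K) (bN K).
Proof. by move=> n; rewrite /bN /bNi Cantor.cancel_to_of; have [_ -> _] := fk_spec K. Qed.
Lemma bN0 K a : a < K -> bN K (a, 0) = a.
Proof. by move=> aK; rewrite /bN; have [_ _ ->] := fk_spec K. Qed.

Lemma encodeK : cancel encode np.
Proof. exact: npK. Qed.
Lemma npK' : cancel np encode.
Proof. by []. Qed.

Definition beta K (ab : Npos * Npos) : Npos := np (bN K (encode ab.1, encode ab.2)).
Definition betai K (x : Npos) : Npos * Npos :=
  (np (bNi K (encode x)).1, np (bNi K (encode x)).2).

Lemma betaK K : cancel (beta K) (betai K).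
Proof.
by move=> [a b]; rewrite /beta /betai /= npK' bNK /= !encodeK.
Qed.
Lemma betaiK K : cancel (betai K) (beta K).
Proof.
move=> x; rewrite /beta /betai /= !npK'.
by rewrite -surjective_pairing bNiK encodeK.
Qed.
Lemma beta1 K a : encode a < K -> beta K (a, Defs.one) = a.
Proof. by move=> aK; rewrite /beta /= bN0 // encodeK. Qed.
Lemma betai1 K a : encode a < K -> betai K a = (a, Defs.one).
Proof. by move=> aK; rewrite -{1}(@beta1 K a aK) betaK. Qed.
Opaque beta betai.

Definition prodT K (G2 G1 : Npos * Npos -> Npos) (xy : Npos * Npos) : Npos :=
  let u := betai K xy.1 in let v := betai K xy.2 in
  beta K (G2 (u.1, v.1), G1 (u.2, v.2)).

Lemma betai_one K : 0 < K -> betai K Defs.one = (Defs.one, Defs.one).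
Proof. by move=> K0; apply: betai1. Qed.

Lemma prod_group K G2 G1 : 0 < K -> is_group_table G2 -> is_group_table G1 ->
  is_group_table (prodT K G2 G1).
Proof.
move=> K0 [A2 I2 V2] [A1 I1 V1]; split.
- by move=> x y z; rewrite /prodT !betaK /= A1 A2.
- move=> x; rewrite /prodT betai_one //=.
  have [-> ->] := I2 (betai K x).1; have [-> ->] := I1 (betai K x).2.
  by rewrite -surjective_pairing betaiK.
- move=> x; have [y2 [h2 h2']] := V2 (betai K x).1.
  have [y1 [h1 h1']] := V1 (betai K x).2.
  exists (beta K (y2, y1)); rewrite /prodT betaK /= h2 h1 h2' h1'.
  by rewrite beta1.
Qed.

Definition sw_f K (x : Npos) : Npos := beta K ((betai K x).2, (betai K x).1).

Lemma sw_fK K : involutive (sw_f K).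
Proof. by move=> x; rewrite /sw_f betaK; case E: (betai K x) => [a b] /=; rewrite -E betaiK. Qed.

Lemma sw_f1 K : 0 < K -> sw_f K Defs.one = Defs.one.
Proof. by move=> K0; rewrite /sw_f betai_one //= beta1. Qed.

Definition sperm (K : nat) : perm :=
  @Perm (sw_f K.+1) (sw_f K.+1) (sw_fK K.+1) (sw_fK K.+1) (@sw_f1 K.+1 (ltn0Sn K)).

Lemma act_prod K G2 G1 x y : is_group_table G2 ->
  encode x < K.+1 -> encode y < K.+1 -> encode (G1 (x, y)) < K.+1 ->
  actT (sperm K) (prodT K.+1 G2 G1) (x, y) = G1 (x, y).
Proof.
move=> [_ I2 _] hx hy hxy.
rewrite /actT /prodT /= /sw_f !betaK /= (@betai1 _ _ hx) (@betai1 _ _ hy) /=.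
by have [-> _] := I2 Defs.one; rewrite beta1.
Qed.

Lemma prod_val K G2 G1 x y : is_group_table G1 ->
  encode x < K -> encode y < K -> encode (G2 (x, y)) < K ->
  prodT K G2 G1 (x, y) = G2 (x, y).
Proof.
move=> [_ I1 _] hx hy hxy.
rewrite /prodT /= (@betai1 _ _ hx) (@betai1 _ _ hy) /=.
by have [-> _] := I1 Defs.one; rewrite beta1.
Qed.

Fixpoint sbound K (s : seq (nat * nat * nat)) : Prop :=
  match s with
  | [::] => True
  | (x, y, z) :: s' => [/\ x < K, y < K, z < K & sbound K s']
  end.

Fixpoint smax (s : seq (nat * nat * nat)) : nat :=
  match s with
  | [::] => 0
  | (x, y, z) :: s' => maxn x (maxn y (maxn z (smax s')))
  end.

Lemma smaxP s K : smax s < K -> sbound K s.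
Proof.
elim: s => [|[[x y] z] s IH] //=.
rewrite !gtn_max => /and3P [hx hy /andP [hz hs]].
by split => //; exact: IH.
Qed.

Lemma cylP_transfer K f f' s :
  (forall a b, encode a < K -> encode b < K -> encode (f (a, b)) < K -> f' (a, b) = f (a, b)) ->
  sbound K s -> cylP f s -> cylP f' s.
Proof.
move=> h; elim: s => [|[[x y] z] s IH] //= [hx hy hz hs] [e1 e2].
split; last exact: IH.
by rewrite h // e1.
Qed.

Lemma dense_act (U : set GSpace) s2 : open U -> U !=set0 -> cyl s2 !=set0 ->
  exists p, (act p @^-1` U) `&` cyl s2 !=set0.
Proof.
move=> oU [G1 UG1] [G2 G2s].
move: oU; rewrite openE => /(_ _ UG1) /nbhsGP [s1 [G1s sU]].
pose K := maxn (smax s1) (smax s2).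
have g1 := tab_group G1; have g2 := tab_group G2.
pose H : GSpace := exist _ (prodT K.+1 (tab G2) (tab G1))
   (mem_set (@prod_group K.+1 _ _ (ltn0Sn K) g2 g1)).
exists (sperm K), H; split.
  apply: sU; rewrite /cyl /=; rewrite tab_act.
  apply: (@cylP_transfer K.+1 _ _ _ _ _ G1s).
    by move=> a b ha hb hab; apply: act_prod.
  by apply: smaxP; rewrite ltnS leq_maxl.
apply: (@cylP_transfer K.+1 _ _ _ _ _ G2s).
  by move=> a b ha hb hab; apply: prod_val.
by apply: smaxP; rewrite ltnS leq_maxr.
Qed.

Lemma actK' p : cancel (act (pinv p)) (act p).
Proof.
move=> G; apply: val_inj => /=; apply: funext => -[x y].
by rewrite /actT /= tab_act /actT /= !pgf.
Qed.

Definition idperm : perm := @Perm id id (fun _ => erefl) (fun _ => erefl) erefl.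

Lemma part2 phi : sentence phi ->
  forall e : nat -> Npos, meager (S_sat phi e) \/ comeager (S_sat phi e).
Proof.
move=> sp e.
have : @BP GSpace (S_sat phi e).
  apply: sat_closure; [exact: BP_open|exact: BP_C|exact: BP_bigcup].
move=> [U [M [oU mM sM]]].
have [[G0 UG0]|U0] := pselect (U !=set0); last first.
  left; apply: (@meager_sub _ _ _ _ mM) => G AG; apply: sM; left; split => // UG.
  by apply: U0; exists G.
right; rewrite /comeager.
have hp : forall n : nat, exists p : perm,
   forall s, unpickle n = Some s -> cyl s !=set0 -> (act p @^-1` U) `&` cyl s !=set0.
  move=> n; case: (unpickle n) => [s|]; last by exists idperm.
  have [ne|ne] := pselect (cyl s !=set0).
    have [p hp] := @dense_act U s oU (ex_intro _ G0 UG0) ne.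
    by exists p => _ [<-].
  by exists idperm => _ [<-] /ne.
have [ps hps] := choice hp.
apply: (@zero_one _ _ (fun n => act (ps n)) (fun n => act (pinv (ps n))) U M oU mM sM).
- by move=> n; exact: act_continuous.
- by move=> n; exact: act_continuous.
- by move=> n; exact: actK.
- by move=> n; exact: actK'.
- move=> n G; rewrite /S_sat /= sat_act (@sat_sentence _ _ _ e sp); split => //.
- move=> V oV [G VG].
  move: oV; rewrite openE => /(_ _ VG) /nbhsGP [s [Gs sV]].
  have [y [Uy sy]] := hps (pickle s) s (pickleK s) (ex_intro _ G Gs).
  by exists (pickle s), y; split => //; exact: sV.
Qed.

Theorem theorem5p8 :
  (forall (phi : formula) (e : nat -> Npos), Borel (S_sat phi e)) /\
  (forall (phi : formula), sentence phi ->
     forall e : nat -> Npos, meager (S_sat phi e) \/ comeager (S_sat phi e)).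
Proof. split; [exact: part1|exact: part2]. Qed.
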